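(* Let $\mathcal A$ be a Banach algebra and let $X$ be a left Banach $\mathcal A$-submodule of $\mathcal A^*$. Then $B_{\mathcal A}(\mathcal A, X^* )=(Q_X)^*$; that is, $B_{\mathcal A}(\mathcal A,X^* )$ (with the operator norm) is isometrically isomorphic, via the canonical pairing $\langle T, af\rangle=\langle f,T(a)\rangle$, to the dual Banach space of $Q_X$.
   Context: $\mathcal A^*$ is a left Banach $\mathcal A$-module via $\langle a\cdot f,b\rangle=\langle f,ba\rangle$ ($a,b\in\mathcal A$, $f\in\mathcal A^*$); $X$ is a closed subspace of $\mathcal A^*$ invariant under this action. $X^*$ is a right Banach $\mathcal A$-module via $\langle m\cdot a,f\rangle=\langle m,a\cdot f\rangle$. $B_{\mathcal A}(\mathcal A,X^* )$ denotes the Banach space of bounded linear maps $T:\mathcal A\to X^*$ with $T(ab)=T(a)\cdot b$ for all $a,b\in\mathcal A$, with the operator norm $\|\cdot\|_M$. For $a\in\mathcal A$ and $f\in X$, $af$ denotes the bounded linear functional on $B_{\mathcal A}(\mathcal A,X^* )$ given by $\langle af,T\rangle=\langle f,T(a)\rangle$. $Q_X$ is the norm closure in $B_{\mathcal A}(\mathcal A,X^* )^*$ of the linear span of $\{af:a\in\mathcal A,f\in X\}$. *)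

(* Defs.v *)
From HB Require Import structures.
From mathcomp Require Import all_boot all_order all_algebra.
From mathcomp Require Import all_classical all_reals all_analysis.
Set Implicit Arguments. Unset Strict Implicit. Unset Printing Implicit Defensive.
Import Order.TTheory GRing.Theory Num.Theory.
Import numFieldNormedType.Exports.
Local Open Scope ring_scope.
Local Open Scope classical_set_scope.

Section BanachDual.
Context {K : numFieldType} {A : normedModType K}.

Definition banach_algebra_mul (mul : A -> A -> A) : Prop :=
  [/\ (forall a b c, mul a (mul b c) = mul (mul a b) c),
      (forall a b c, mul (a + b) c = mul a c + mul b c),
      (forall a b c, mul a (b + c) = mul a b + mul a c),
      (forall (k : K) a b, mul (k *: a) b = k *: mul a b /\ mul a (k *: b) = k *: mul a b)
    & (forall a b, `|mul a b| <= `|a| * `|b|)].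

(* d is a bound for the functional f : A -> K, i.e. |f x| <= d |x|;
   the norm of f in A^* is the least such d. *)
Definition fbound (f : A -> K) (d : K) : Prop := forall x, `|f x| <= d * `|x|.

Definition in_dual (f : A -> K) : Prop :=
  [/\ (forall x y, f (x + y) = f x + f y),
      (forall (k : K) x, f (k *: x) = k * f x)
    & exists c, fbound f c].

Definition dact (mul : A -> A -> A) (a : A) (f : A -> K) : A -> K :=
  fun b => f (mul b a).

Definition closed_left_submodule (mul : A -> A -> A) (X : set (A -> K)) : Prop :=
  [/\ (forall f, X f -> in_dual f),
      X (fun _ => 0),
      (forall f g, X f -> X g -> X (fun x => f x + g x)),
      (forall (k : K) f, X f -> X (fun x => k * f x)) /\
      (forall f, in_dual f ->
         (forall e : K, 0 < e -> exists g, X g /\ fbound (fun x => f x - g x) e) ->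
         X f)
    & (forall a f, X f -> X (dact mul a f))].

(* Maps T : A -> X^*; an element of X^* is represented as a function
   (A -> K) -> K, only its values on X being relevant.
   c bounds T in the operator norm of B(A, X^* ):
   |<f, T a>| <= c |a| ||f|| for f in X (||f|| the least bound d of f). *)
Definition Tbound (X : set (A -> K)) (T : A -> (A -> K) -> K) (c : K) : Prop :=
  forall a f d, X f -> fbound f d -> `|T a f| <= c * `|a| * d.

Definition in_BA (mul : A -> A -> A) (X : set (A -> K))
    (T : A -> (A -> K) -> K) : Prop :=
  [/\ (forall a f g, X f -> X g -> T a (fun x => f x + g x) = T a f + T a g),
      (forall a (k : K) f, X f -> T a (fun x => k * f x) = k * T a f),
      (forall a b f, X f -> T (a + b) f = T a f + T b f),
      (forall (k : K) a f, X f -> T (k *: a) f = k * T a f) /\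
      (exists c, Tbound X T c)
    & (* T(ab) = T(a).b, where <m.b, f> = <m, b.f> *)
      (forall a b f, X f -> T (mul a b) f = T a (dact mul b f))].

Definition Qbound (mul : A -> A -> A) (X : set (A -> K))
    (q : (A -> (A -> K) -> K) -> K) (d : K) : Prop :=
  forall T c, in_BA mul X T -> Tbound X T c -> `|q T| <= d * c.

Definition in_BA_dual (mul : A -> A -> A) (X : set (A -> K))
    (q : (A -> (A -> K) -> K) -> K) : Prop :=
  [/\ (forall T T', in_BA mul X T -> in_BA mul X T' ->
         q (fun a f => T a f + T' a f) = q T + q T'),
      (forall (k : K) T, in_BA mul X T -> q (fun a f => k * T a f) = k * q T)
    & exists d, Qbound mul X q d].

Definition af_fun (a : A) (f : A -> K) : (A -> (A -> K) -> K) -> K :=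
  fun T => T a f.

(* Q_X : norm closure in B_A(A,X^* )^* of span{ af : a in A, f in X } *)
Definition in_QX (mul : A -> A -> A) (X : set (A -> K))
    (q : (A -> (A -> K) -> K) -> K) : Prop :=
  in_BA_dual mul X q /\
  forall e : K, 0 < e ->
    exists (n : nat) (k : 'I_n -> K) (a : 'I_n -> A) (f : 'I_n -> A -> K),
      (forall i, X (f i)) /\
      Qbound mul X (fun T => q T - \sum_(i < n) k i * af_fun (a i) (f i) T) e.

Definition QXbound (mul : A -> A -> A) (X : set (A -> K))
    (psi : ((A -> (A -> K) -> K) -> K) -> K) (c : K) : Prop :=
  forall q d, in_QX mul X q -> Qbound mul X q d -> `|psi q| <= c * d.

Definition in_QX_dual (mul : A -> A -> A) (X : set (A -> K))
    (psi : ((A -> (A -> K) -> K) -> K) -> K) : Prop :=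
  [/\ (forall q q', in_QX mul X q -> in_QX mul X q' ->
         psi (fun T => q T + q' T) = psi q + psi q'),
      (forall (k : K) q, in_QX mul X q -> psi (fun T => k * q T) = k * psi q)
    & exists c, QXbound mul X psi c].

Definition canonQX (T : A -> (A -> K) -> K) : ((A -> (A -> K) -> K) -> K) -> K :=
  fun q => q T.

End BanachDual.

(* Main.v *)
Require Import Defs.
From HB Require Import structures.
From mathcomp Require Import all_boot all_order all_algebra.
From mathcomp Require Import all_classical all_reals all_analysis.
From mathcomp Require Import ring.
Import Order.TTheory GRing.Theory Num.Theory.
Import numFieldNormedType.Exports.
Local Open Scope ring_scope.
Local Open Scope classical_set_scope.
Set Implicit Arguments. Unset Strict Implicit.

Lemma small0 {K : numFieldType} (x C : K) :
  (forall e : K, 0 < e -> `|x| <= e * C) -> x = 0.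
Proof.
move=> H; have C0 : 0 <= C.
  by have := le_trans (normr_ge0 x) (H 1 ltr01); rewrite mul1r.
apply/eqP; apply/negP => /negP nx.
have xp : 0 < `|x| by rewrite normr_gt0.
have C1 : 0 < C + 1 by apply: ltr_wpDl C0 ltr01.
have := H (`|x| / (C + 1)) (divr_gt0 xp C1).
rewrite -mulrA ler_pMr // mulrC ler_pdivlMr // mul1r.
by rewrite -subr_ge0 opprD addrA subrr add0r oppr_ge0 ler10.
Qed.

Lemma Tbound_ge0 {K : numFieldType} {A : normedModType K} (X : set (A -> K)) T c :
  (exists x : A, x != 0) -> X (fun _ => 0) -> Tbound X T c -> 0 <= c.
Proof.
move=> [x nx] X0 /(_ x _ 1 X0) H.
have : 0 <= c * `|x| * 1.
  apply: le_trans (normr_ge0 _) (H _).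
  by move=> y; rewrite normr0 mul1r normr_ge0.
by rewrite mulr1 pmulr_lge0 // normr_gt0.
Qed.


Lemma Qbound_af {K : numFieldType} {A : normedModType K} mul (X : set (A -> K)) a f d :
  X f -> fbound f d -> Qbound mul X (af_fun a f) (`|a| * d).
Proof.
move=> Xf fd T c _ Tb; rewrite /af_fun.
have := Tb a f d Xf fd.
by rewrite [_ * c]mulrC mulrA.
Qed.

Lemma QX_af {K : numFieldType} {A : normedModType K} mul (X : set (A -> K)) a f :
  (exists x : A, x != 0) -> closed_left_submodule mul X -> X f ->
  in_QX mul X (af_fun a f).
Proof.
move=> NT [Xd X0 _ _ _] Xf; split.
  split => //; have [_ _ [d fd]] := Xd f Xf.
  by exists (`|a| * d); exact: Qbound_af.
move=> e e0; exists 1%N, (fun=> 1), (fun=> a), (fun=> f); split => // T c HT Tb.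
rewrite big_ord1 mul1r /af_fun subrr normr0.
by apply: mulr_ge0; [exact: ltW | exact: Tbound_ge0 Tb].
Qed.

Lemma QX0 {K : numFieldType} {A : normedModType K} mul (X : set (A -> K)) :
  (exists x : A, x != 0) -> closed_left_submodule mul X ->
  in_QX mul X (fun _ => 0).
Proof.
move=> NT [Xd X0 _ _ _]; split.
  split; first by move=> *; rewrite addr0.
    by move=> *; rewrite mulr0.
  by exists 0 => T c _ _; rewrite normr0 mul0r.
move=> e e0; exists 0%N, (fun=> 0), (fun=> 0), (fun=> fun=> 0); split => // T c HT Tb.
rewrite big_ord0 subrr normr0.
by apply: mulr_ge0; [exact: ltW | exact: Tbound_ge0 Tb].
Qed.

Lemma QX_scale {K : numFieldType} {A : normedModType K} mul (X : set (A -> K)) k q :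
  (exists x : A, x != 0) -> closed_left_submodule mul X ->
  in_QX mul X q -> in_QX mul X (fun T => k * q T).
Proof.
move=> NT [Xd X0 _ _ _] [[qadd qhom [d qb]] qap]; split.
  split.
  - by move=> T T' HT HT'; rewrite qadd // mulrDr.
  - by move=> k' T HT; rewrite qhom // mulrCA.
  exists (`|k| * d) => T c HT Tb; rewrite normrM -mulrA ler_wpM2l //.
  exact: qb.
move=> e e0.
have k1 : 0 < `|k| + 1 by apply: ltr_wpDl (normr_ge0 k) ltr01.
have [n [kk [a [f [Xf Hb]]]]] := qap _ (divr_gt0 e0 k1).
exists n, (fun i => k * kk i), a, f; split => // T c HT Tb.
have c0 := Tbound_ge0 NT X0 Tb.
have E : \sum_(i < n) k * kk i * af_fun (a i) (f i) T =
         k * \sum_(i < n) kk i * af_fun (a i) (f i) T.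
  by rewrite mulr_sumr; apply: eq_bigr => i _; rewrite mulrA.
rewrite E -mulrBr normrM.
apply: le_trans (ler_wpM2l (normr_ge0 k) (Hb T c HT Tb)) _.
rewrite mulrA ler_wpM2r // mulrCA ler_piMr //; first exact: ltW.
by rewrite ler_pdivrMr // mul1r lerDl.
Qed.

Lemma QX_add {K : numFieldType} {A : normedModType K} mul (X : set (A -> K)) q q' :
  (exists x : A, x != 0) -> closed_left_submodule mul X ->
  in_QX mul X q -> in_QX mul X q' -> in_QX mul X (fun T => q T + q' T).
Proof.
move=> NT [Xd X0 _ _ _] [[qadd qhom [d qb]] qap] [[qadd' qhom' [d' qb']] qap']; split.
  split.
  - by move=> T T' HT HT'; rewrite qadd // qadd' // addrACA.
  - by move=> k' T HT; rewrite qhom // qhom' // mulrDr.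
  exists (d + d') => T c HT Tb; rewrite mulrDl.
  by apply: le_trans (ler_normD _ _) (lerD (qb _ _ HT Tb) (qb' _ _ HT Tb)).
move=> e e0.
have e2 : 0 < e / 2 by apply: divr_gt0 => //; rewrite ltr0n.
have [n1 [k1 [a1 [f1 [Xf1 Hb1]]]]] := qap _ e2.
have [n2 [k2 [a2 [f2 [Xf2 Hb2]]]]] := qap' _ e2.
pose kk (i : 'I_(n1 + n2)) := match fintype.split i with inl j => k1 j | inr j => k2 j end.
pose aa (i : 'I_(n1 + n2)) := match fintype.split i with inl j => a1 j | inr j => a2 j end.
pose ff (i : 'I_(n1 + n2)) := match fintype.split i with inl j => f1 j | inr j => f2 j end.
exists (n1 + n2)%N, kk, aa, ff; split.
  by move=> i; rewrite /ff; case: (fintype.split i).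
move=> T c HT Tb.
have sl : forall i : 'I_n1, fintype.split (fintype.lshift n2 i) = inl i by move=> i; exact: (@unsplitK n1 n2 (inl i)).
have sr : forall i : 'I_n2, fintype.split (fintype.rshift n1 i) = inr i by move=> i; exact: (@unsplitK n1 n2 (inr i)).
have E : \sum_(i < n1 + n2) kk i * af_fun (aa i) (ff i) T =
  \sum_(i < n1) k1 i * af_fun (a1 i) (f1 i) T + \sum_(i < n2) k2 i * af_fun (a2 i) (f2 i) T.
  rewrite big_split_ord; congr (_ + _); apply: eq_bigr => i _.
    by rewrite /kk /aa /ff sl.
  by rewrite /kk /aa /ff sr.
rewrite E opprD addrACA.
apply: le_trans (ler_normD _ _) _.
rewrite [X in _ <= X * _](splitr e) mulrDl.
exact: lerD (Hb1 T c HT Tb) (Hb2 T c HT Tb).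
Qed.

Lemma psi0 {K : numFieldType} {A : normedModType K} mul (X : set (A -> K)) psi :
  (exists x : A, x != 0) -> closed_left_submodule mul X ->
  in_QX_dual mul X psi -> psi (fun _ => 0) = 0.
Proof.
move=> NT CL [_ _ [c Hc]].
have Qb : Qbound mul X (fun _ => 0) 0 by move=> T c' _ _; rewrite normr0 mul0r.
have := Hc _ _ (QX0 NT CL) Qb.
by rewrite mulr0 normr_le0 => /eqP.
Qed.

Lemma psi_ext {K : numFieldType} {A : normedModType K} mul (X : set (A -> K)) psi q q' :
  (exists x : A, x != 0) -> closed_left_submodule mul X ->
  in_QX_dual mul X psi -> in_QX mul X q -> in_QX mul X q' ->
  (forall T, in_BA mul X T -> q T = q' T) -> psi q = psi q'.
Proof.
move=> NT CL [padd phom [c Hc]] Hq Hq' E.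
have Hm := QX_scale (-1) NT CL Hq'.
have Hr := QX_add NT CL Hq Hm.
have Qb : Qbound mul X (fun T => q T + -1 * q' T) 0.
  by move=> T c' HT _; rewrite E // mulN1r subrr normr0 mul0r.
have := Hc _ _ Hr Qb.
rewrite mulr0 normr_le0 padd // phom // mulN1r subr_eq0.
by move=> /eqP.
Qed.

Lemma psi_sum {K : numFieldType} {A : normedModType K} mul (X : set (A -> K)) psi
   (I : Type) (r : seq I) (F : I -> (A -> (A -> K) -> K) -> K) :
  (exists x : A, x != 0) -> closed_left_submodule mul X ->
  in_QX_dual mul X psi -> (forall i, in_QX mul X (F i)) ->
  in_QX mul X (fun T => \sum_(i <- r) F i T) /\
  psi (fun T => \sum_(i <- r) F i T) = \sum_(i <- r) psi (F i).
Proof.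
move=> NT CL Hpsi HF; elim: r => [|x r [IHq IHp]].
  have -> : (fun T => \sum_(i <- [::]) F i T) = fun _ => 0.
    by apply: funext => T; rewrite big_nil.
  by split; [exact: QX0 | rewrite big_nil (psi0 NT CL Hpsi)].
have -> : (fun T => \sum_(i <- x :: r) F i T) =
          fun T => F x T + (fun T => \sum_(i <- r) F i T) T.
  by apply: funext => T; rewrite big_cons.
split; first exact: QX_add.
case: Hpsi => padd _ _.
by rewrite padd // IHp big_cons.
Qed.

Lemma BA0 {K : numFieldType} {A : normedModType K} mul (X : set (A -> K)) :
  in_BA mul X (fun _ _ => 0).
Proof.
split; do ?by move=> *; rewrite ?addr0 ?mulr0.
split; first by move=> *; rewrite mulr0.
by exists 0 => a f d _ _; rewrite normr0 !mul0r.
Qed.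

Theorem mainTheorem1 (K : numFieldType) (A : completeNormedModType K)
    (mul : A -> A -> A) (X : set (A -> K)) :
  banach_algebra_mul mul ->
  closed_left_submodule mul X ->
  [/\ (* canonQX maps B_A(A,X^* ) into (Q_X)^* *)
      (forall T, in_BA mul X T -> in_QX_dual mul X (canonQX T)),
      (* isometrically: T and canonQX T have the same bounds, hence equal norms *)
      (forall T (c : K), in_BA mul X T -> 0 <= c ->
         (Tbound X T c <-> QXbound mul X (canonQX T) c))
    & (* onto (Q_X)^* *)
      (forall psi, in_QX_dual mul X psi ->
         exists T, in_BA mul X T /\ forall q, in_QX mul X q -> psi q = canonQX T q)].
Proof.
move=> _ CL.
have CL' := CL; case: CL' => Xd X0 Xadd [Xsc Xcl] Xdact.
have [NT | TR] := pselect (exists x : A, x != 0); last first.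
  have Z : forall x : A, x = 0.
    by move=> x; have [//|nx] := eqVneq x 0; case: TR; exists x.
  split.
  - move=> T HT; have [_ _ _ [_ [c Tc]] _] := HT; split => //.
    by exists c => q d _ Qb; rewrite /canonQX mulrC; exact: Qb.
  - move=> T c HT c0; split.
      by move=> Tc q d _ Qb; rewrite /canonQX mulrC; exact: Qb T c HT Tc.
    move=> _ a f d Xf fd.
    have [_ _ adda _ _] := HT.
    have h := adda 0 0 f Xf; rewrite addr0 in h.
    have h0 : T 0 f = 0.
      by apply: (@addrI _ (T 0 f)); rewrite addr0 -h.
    by rewrite (Z a) h0 normr0 normr0 mulr0 mul0r.
  move=> psi Hpsi; exists (fun _ _ => 0); split; first exact: BA0.
  move=> q [_ Hq]; exfalso.
  have [n [k [a [f [_ Hb]]]]] := Hq 1 ltr01.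
  have Tb : Tbound X (fun (_ : A) (_ : A -> K) => (0 : K)) (-1).
    by move=> a' f' d _ _; rewrite (Z a') !normr0 mulr0 mul0r.
  have := le_trans (normr_ge0 _) (Hb _ _ (BA0 mul X) Tb).
  by rewrite mul1r oppr_ge0 ler10.
split.
- move=> T HT; have [_ _ _ [_ [c Tc]] _] := HT; split => //.
  by exists c => q d _ Qb; rewrite /canonQX mulrC; exact: Qb.
- move=> T c HT c0; split.
    by move=> Tc q d _ Qb; rewrite /canonQX mulrC; exact: Qb T c HT Tc.
  move=> H a f d Xf fd.
  have := H (af_fun a f) (`|a| * d) (QX_af a NT CL Xf) (Qbound_af (mul:=mul) a Xf fd).
  by rewrite /canonQX /af_fun mulrA.
move=> psi Hpsi.
have Hpsi' := Hpsi; case: Hpsi' => padd phom [cp Hcp].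
pose T0 := fun a f => psi (af_fun a f).
have af := fun a f (Xf : X f) => QX_af a NT CL Xf.
have HT0 : in_BA mul X T0.
  split.
  - move=> a f g Xf Xg; rewrite /T0 -padd; try exact: af.
    apply: (psi_ext NT CL Hpsi (af _ _ (Xadd _ _ Xf Xg)) (QX_add NT CL (af _ _ Xf) (af _ _ Xg))).
    by move=> T [h _ _ _ _]; exact: h.
  - move=> a k f Xf; rewrite /T0 -phom; last exact: af.
    apply: (psi_ext NT CL Hpsi (af _ _ (Xsc k _ Xf)) (QX_scale k NT CL (af _ _ Xf))).
    by move=> T [_ h _ _ _]; exact: h.
  - move=> a b f Xf; rewrite /T0 -padd; try exact: af.
    apply: (psi_ext NT CL Hpsi (af _ _ Xf) (QX_add NT CL (af _ _ Xf) (af _ _ Xf))).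
    by move=> T [_ _ h _ _]; exact: h.
  - split.
      move=> k a f Xf; rewrite /T0 -phom; last exact: af.
      apply: (psi_ext NT CL Hpsi (af _ _ Xf) (QX_scale k NT CL (af _ _ Xf))).
      by move=> T [_ _ _ [h _] _]; exact: h.
    exists cp => a f d Xf fd; rewrite -mulrA.
    exact: Hcp _ _ (af a f Xf) (Qbound_af (mul:=mul) a Xf fd).
  - move=> a b f Xf; rewrite /T0.
    apply: (psi_ext NT CL Hpsi (af _ _ Xf) (af _ _ (Xdact _ _ Xf))).
    by move=> T [_ _ _ _ h]; exact: h.
exists T0; split => // q Hq.
have [_ _ _ [_ [cT Tc]] _] := HT0.
apply/eqP; rewrite -subr_eq0; apply/eqP; apply: (@small0 _ _ (cp + cT)) => e e0.
case: (Hq) => _ /(_ e e0) [n [k [a [f [Xf Hb]]]]].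
pose s := fun T => \sum_(i < n) k i * af_fun (a i) (f i) T.
have Fq : forall i : 'I_n, in_QX mul X (fun T => k i * af_fun (a i) (f i) T).
  by move=> i; apply: QX_scale => //; exact: af.
have [sQ sE] := psi_sum (index_enum 'I_n) NT CL Hpsi Fq.
have ps : psi s = s T0.
  rewrite /s; transitivity (\sum_(i < n) psi (fun T => k i * af_fun (a i) (f i) T)).
    exact: sE.
  by apply: eq_bigr => i _; rewrite phom //; exact: af.
have sQ' : in_QX mul X s := sQ.
have mQ := QX_scale (-1) NT CL sQ'.
have dQ : in_QX mul X (fun T => q T - s T).
  have -> : (fun T => q T - s T) = (fun T => q T + -1 * s T).
    by apply: funext => T; rewrite mulN1r.
  exact: QX_add.
have pd : psi (fun T => q T - s T) = psi q - psi s.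
  have -> : (fun T => q T - s T) = (fun T => q T + (fun T => -1 * s T) T).
    by apply: funext => T; rewrite mulN1r.
  by rewrite padd // phom // mulN1r.
have -> : psi q - canonQX T0 q = psi (fun T => q T - s T) - (q T0 - s T0).
  rewrite pd ps /canonQX; ring.
apply: le_trans (ler_normB _ _) _.
rewrite mulrDr [e * cp]mulrC.
apply: lerD; first exact: Hcp _ _ dQ Hb.
exact: Hb T0 cT HT0 Tc.
Qed.
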